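(* For each $n\ge1$ let $f_n:\{1,\dots,n\}^2\to[0,\infty)$ be non-decreasing in each of its two arguments separately. Suppose that $\liminf_{n\to\infty}f_n(p_n,q_n)>0$ for every sequence $\{(p_n,q_n)\}$ with $(p_n,q_n)\in\{1,\dots,n\}^2$ satisfying either of the following: (i) $q_n\equiv1$ and $\lim_{n\to\infty}p_n/n$ exists and lies in $(0,1)$; (ii) $\lim_{n\to\infty}q_n=\infty$ and $\lim_{n\to\infty}p_nq_n^2/n$ exists and lies in $(0,\infty)$. Then $\liminf_{n\to\infty}f_n(p_n,q_n)>0$ for every sequence $\{(p_n,q_n)\}$ with $1\le p_n,q_n\le n$ such that $\lim_{n\to\infty}p_nq_n^2/n$ exists and lies in $(0,\infty)$. *)

(* Defs.v *)
From Stdlib Require Import Reals Lra Lia.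
From Coquelicot Require Import Coquelicot.
Open Scope R_scope.

(* The sequence n |-> (p_n, q_n) lies in {1..n}^2 for every n >= 1
   (index 0 is irrelevant: sequences are indexed by n >= 1). *)
Definition in_box (p q : nat -> nat) : Prop :=
  forall n : nat, (1 <= n)%nat ->
    (1 <= p n <= n)%nat /\ (1 <= q n <= n)%nat.

Definition admissible_family (f : nat -> nat -> nat -> R) : Prop :=
  (forall n p q, (1 <= n)%nat -> (1 <= p <= n)%nat -> (1 <= q <= n)%nat ->
      0 <= f n p q) /\
  (forall n p p' q, (1 <= p)%nat -> (p <= p')%nat -> (p' <= n)%nat ->
      (1 <= q <= n)%nat -> f n p q <= f n p' q) /\
  (forall n p q q', (1 <= p <= n)%nat -> (1 <= q)%nat -> (q <= q')%nat ->
      (q' <= n)%nat -> f n p q <= f n p q').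

Definition liminf_pos (f : nat -> nat -> nat -> R) (p q : nat -> nat) : Prop :=
  Rbar_lt (Finite 0) (LimInf_seq (fun n => f n (p n) (q n))).

Definition pq2n (p q : nat -> nat) (n : nat) : R :=
  INR (p n) * INR (q n) ^ 2 / INR n.

(* Main.v *)
Require Import Defs.
From Stdlib Require Import Reals.
From Coquelicot Require Import Coquelicot.
From Stdlib Require Import Lra Lia ClassicalEpsilon Classical.
Open Scope R_scope.

Lemma LI_correct (u : nat -> R) : is_LimInf_seq u (LimInf_seq u).
Proof. exact (proj2_sig (ex_LimInf_seq u)). Qed.

Lemma L1 (u : nat -> R) : Rbar_lt (Finite 0) (LimInf_seq u) ->
  exists eps, 0 < eps /\ exists N, forall n, (N <= n)%nat -> eps < u n.
Proof.
  intros H. pose proof (LI_correct u) as C.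
  destruct (LimInf_seq u) as [l| |]; simpl in H, C.
  - assert (Hp : 0 < l / 2) by lra.
    destruct (C (mkposreal _ Hp)) as [_ [N HN]]. exists (l/2). split; [lra|].
    exists N. intros n Hn. specialize (HN n Hn). simpl in HN. lra.
  - destruct (C 1) as [N HN]. exists 1. split; [lra|]. eauto.
  - contradiction.
Qed.

Lemma L2 (u : nat -> R) : ~ Rbar_lt (Finite 0) (LimInf_seq u) ->
  forall eps, 0 < eps -> forall N, exists n, (N <= n)%nat /\ u n < eps.
Proof.
  intros H eps Heps N. pose proof (LI_correct u) as C.
  destruct (LimInf_seq u) as [l| |]; simpl in H, C.
  - destruct (C (mkposreal _ Heps)) as [C1 _]. destruct (C1 N) as [n [Hn1 Hn2]].
    exists n. simpl in Hn2. split; [auto|lra].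
  - exfalso; apply H; exact I.
  - apply C.
Qed.

Lemma nat_gt (x : R) : exists n : nat, x < INR n.
Proof.
  destruct (archimed x) as [H1 _].
  exists (Z.to_nat (Z.max 0 (up x))).
  rewrite INR_IZR_INZ, Znat.Z2Nat.id by lia.
  apply Rlt_le_trans with (1 := H1). apply IZR_le. lia.
Qed.

Definition rr (n : nat) : nat := Nat.sqrt (Nat.sqrt n).

Lemma rr_ge m n : (m ^ 4 <= n)%nat -> (m <= rr n)%nat.
Proof.
  intros H. unfold rr.
  assert (E : (m ^ 4 = (m * m) * (m * m))%nat) by (simpl; ring).
  rewrite E in H. apply Nat.sqrt_le_mono in H. rewrite Nat.sqrt_square in H.
  apply Nat.sqrt_le_mono in H. rewrite Nat.sqrt_square in H. exact H.
Qed.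

Lemma rr_le n : (rr n * rr n * (rr n * rr n) <= n)%nat.
Proof.
  unfold rr. destruct (Nat.sqrt_spec n) as [H1 _]; [lia|].
  destruct (Nat.sqrt_spec (Nat.sqrt n)) as [H2 _]; [lia|].
  set (s := Nat.sqrt n) in *. set (t := Nat.sqrt s) in *.
  apply Nat.le_trans with (s * s)%nat; [|exact H1].
  apply Nat.mul_le_mono; exact H2.
Qed.

Lemma rr_pos n : (1 <= n)%nat -> (1 <= rr n <= n)%nat.
Proof.
  intros Hn. assert (H1 : (1 <= rr n)%nat) by (apply rr_ge; simpl; lia).
  split; [exact H1|]. pose proof (rr_le n) as H2. set (r := rr n) in *.
  assert (r <= r * r)%nat by nia. assert (r * r <= r * r * (r * r))%nat by nia. lia.
Qed.

Lemma rr_small eps : 0 < eps -> exists N, forall n, (N <= n)%nat ->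
  INR (rr n) ^ 2 / INR n < eps.
Proof.
  intros He. destruct (nat_gt (/ eps)) as [m Hm].
  exists (S m ^ 4)%nat. intros n Hn.
  assert (Hr : (S m <= rr n)%nat) by (apply rr_ge; exact Hn).
  pose proof (rr_le n) as Hle.
  apply le_INR in Hr. apply le_INR in Hle. rewrite !mult_INR in Hle.
  rewrite S_INR in Hr.
  set (x := INR (rr n)) in *. assert (0 <= INR m) by apply pos_INR.
  assert (Hx1 : 1 <= x) by lra.
  assert (1 <= x * x) by nra. assert (1 <= x * x * (x * x)) by nra.
  assert (Hn0 : 0 < INR n) by lra.
  assert (Hex : / eps < x) by lra.
  assert (Hxe : 1 < x * eps).
  { apply Rmult_lt_compat_r with (r := eps) in Hex; [|lra].
    rewrite Rinv_l in Hex; lra. }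
  apply Rmult_lt_reg_r with (INR n); [lra|].
  unfold Rdiv. rewrite Rmult_assoc, Rinv_l by lra.
  assert (eps * (x * x * (x * x)) <= eps * INR n) by (apply Rmult_le_compat_l; lra).
  assert (x * x * x < (x * eps) * (x * x * x)).
  { rewrite <- (Rmult_1_l (x*x*x)) at 1. apply Rmult_lt_compat_r; [|lra]. nra. }
  assert (x * x <= x * x * x) by nra.
  nra.
Qed.

Lemma nat_bounds X Y d md : (md < Y)%nat -> X = (Y * d + md)%nat ->
  (max 1 d * Y <= X + Y)%nat /\ (X <= max 1 d * Y + Y)%nat.
Proof.
  intros H1 H2. destruct (Nat.max_spec 1 d) as [[_ E]|[_ E]]; rewrite E; nia.
Qed.

Lemma lift_bound p q r n : (1 <= n)%nat -> (1 <= r)%nat ->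
  Rabs (INR (max 1 (p * q ^ 2 / r ^ 2)) * INR r ^ 2 / INR n
        - INR p * INR q ^ 2 / INR n) <= INR r ^ 2 / INR n.
Proof.
  intros Hn Hr.
  set (X := (p * q ^ 2)%nat). set (Y := (r ^ 2)%nat).
  assert (HY : (Y <> 0)%nat) by (unfold Y; apply Nat.pow_nonzero; lia).
  pose proof (Nat.div_mod X Y HY) as Hdm.
  pose proof (Nat.mod_upper_bound X Y HY) as Hmu.
  set (d := (X / Y)%nat) in *. set (md := (X mod Y)%nat) in *.
  clearbody d md.
  destruct (nat_bounds X Y d md Hmu Hdm) as [Hb1 Hb2].
  apply le_INR in Hb1. apply le_INR in Hb2.
  clear Hdm Hmu. subst X Y. rewrite ?plus_INR, ?mult_INR, ?pow_INR in Hb1, Hb2.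
  assert (Hn0 : 0 < INR n) by (apply lt_0_INR; lia).
  unfold Rdiv. rewrite <- Rmult_minus_distr_r.
  rewrite Rabs_mult, (Rabs_right (/ INR n)) by (apply Rle_ge, Rlt_le, Rinv_0_lt_compat; lra).
  apply Rmult_le_compat_r; [apply Rlt_le, Rinv_0_lt_compat; lra|].
  apply Rabs_le. split; lra.
Qed.

Theorem lemma3p6 (f : nat -> nat -> nat -> R) :
  admissible_family f ->
  (* (i) *)
  (forall p q : nat -> nat, in_box p q ->
     (forall n, (1 <= n)%nat -> q n = 1%nat) ->
     (exists l : R, 0 < l < 1 /\
        is_lim_seq (fun n => INR (p n) / INR n) (Finite l)) ->
     liminf_pos f p q) ->
  (* (ii) *)
  (forall p q : nat -> nat, in_box p q ->
     is_lim_seq (fun n => INR (q n)) p_infty ->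
     (exists l : R, 0 < l /\ is_lim_seq (pq2n p q) (Finite l)) ->
     liminf_pos f p q) ->
  forall p q : nat -> nat, in_box p q ->
     (exists l : R, 0 < l /\ is_lim_seq (pq2n p q) (Finite l)) ->
     liminf_pos f p q.
Proof.
  intros Hf Hi Hii p q Hbox [l [Hl Hlim]].
  destruct Hf as [_ [Hfp Hfq]].
  unfold liminf_pos. apply NNPP; intro Hneg.
  pose proof (L2 _ Hneg) as H0. simpl in H0.
  apply is_lim_seq_spec in Hlim.
  destruct (classic (exists K, forall eps, 0 < eps -> forall N, exists n,
     (N <= n)%nat /\ (q n <= K)%nat /\ f n (p n) (q n) < eps)) as [[K HA] | HB].
  -
    assert (Hl2 : 0 < l / 2) by lra.
    destruct (Hlim (mkposreal _ Hl2)) as [N1 HN1]. simpl in HN1.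
    destruct (nat_gt (2 * INR K ^ 2 / l)) as [D0 HD0].
    set (D := (S (S D0))). 
    assert (HD : 2 * INR K ^ 2 / l < INR D) by (unfold D; rewrite !S_INR; lra).
    assert (HD2 : 2 <= INR D) by (unfold D; rewrite !S_INR; pose proof (pos_INR D0); lra).
    set (pK := fun n => max 1 (n / D)).
    assert (HpK : forall n, (1 <= n)%nat -> (1 <= pK n <= n)%nat /\
              INR n / INR D - 1 <= INR (pK n) <= INR n / INR D + 1).
    { intros n Hn. unfold pK.
      assert (HD0' : (D <> 0)%nat) by (unfold D; lia).
      pose proof (Nat.div_mod n D HD0') as Hdm.
      pose proof (Nat.mod_upper_bound n D HD0') as Hmu.
      set (d := (n / D)%nat) in *. set (md := (n mod D)%nat) in *. clearbody d md.
      assert (Hd : (d <= n)%nat) by (unfold D in *; nia).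
      split; [lia|].
      apply le_INR in Hd.
      assert (E : INR n = INR D * INR d + INR md) by (rewrite Hdm, plus_INR, mult_INR; reflexivity).
      apply lt_INR in Hmu. pose proof (pos_INR md).
      assert (Hq : INR n / INR D = INR d + INR md / INR D) by (rewrite E; field; lra).
      assert (0 <= INR md / INR D < 1).
      { split. apply Rdiv_le_0_compat; lra.
        apply Rmult_lt_reg_r with (INR D); [lra|]. unfold Rdiv. rewrite Rmult_assoc, Rinv_l by lra. lra. }
      destruct (Nat.max_spec 1 d) as [[Hlt ->]|[Hle ->]].
      - split; lra.
      - apply le_INR in Hle. change (INR 1) with 1 in *. pose proof (pos_INR d). split; lra. }
    assert (HposK : liminf_pos f pK (fun _ => 1%nat)).
    { apply Hi.
      - intros n Hn. split; [apply HpK; auto| lia].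
      - auto.
      - exists (/ INR D). split.
        + split. apply Rinv_0_lt_compat; lra.
          rewrite <- Rinv_1. apply Rinv_lt_contravar; lra.
        + apply is_lim_seq_spec. intros eps.
          destruct (nat_gt (/ eps)) as [m Hm].
          exists (S m). intros n Hn.
          assert (Hn1 : (1 <= n)%nat) by lia.
          destruct (HpK n Hn1) as [_ [Hb1 Hb2]].
          assert (Hnpos : 0 < INR n) by (apply lt_0_INR; lia).
          apply le_INR in Hn. rewrite S_INR in Hn.
          pose proof (cond_pos eps) as Heps.
          assert (Hie : / INR n < eps).
          { apply Rmult_lt_reg_r with (INR n); [lra|]. rewrite Rinv_l by lra.
            apply Rmult_lt_compat_r with (r := eps) in Hm; [|lra].
            rewrite Rinv_l in Hm by lra. nra. }
          assert (E1 : INR (pK n) / INR n - / INR D = (INR (pK n) - INR n / INR D) * / INR n)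
            by (field; lra).
          rewrite E1, Rabs_mult, (Rabs_right (/ INR n)) by (apply Rle_ge, Rlt_le, Rinv_0_lt_compat; lra).
          apply Rle_lt_trans with (1 * / INR n); [|lra].
          apply Rmult_le_compat_r; [apply Rlt_le, Rinv_0_lt_compat; lra|].
          apply Rabs_le. split; lra. }
    destruct (L1 _ HposK) as [eps [Heps [N2 HN2]]].
    destruct (HA eps Heps (max N1 (max N2 1))) as [n [Hn [HqK Hu]]].
    assert (Hn1 : (1 <= n)%nat) by lia.
    specialize (HN2 n ltac:(lia)). specialize (HN1 n ltac:(lia)).
    destruct (Hbox n Hn1) as [Hpn Hqn].
    destruct (HpK n Hn1) as [HpKb _].
    assert (Hle : (pK n <= p n)%nat).
    { unfold pK. apply Nat.max_lub; [lia|].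
      assert (HD0' : (D <> 0)%nat) by (unfold D; lia).
      pose proof (Nat.div_mod n D HD0') as Hdm.
      set (d := (n / D)%nat) in *. set (md := (n mod D)%nat) in *. clearbody d md.
      destruct (Compare_dec.le_lt_dec d (p n)) as [Hok|Hbad]; [exact Hok|exfalso].
      apply lt_INR in Hbad.
      assert (E : INR n = INR D * INR d + INR md) by (rewrite Hdm, plus_INR, mult_INR; reflexivity).
      pose proof (pos_INR md).
      apply le_INR in HqK. destruct Hqn as [Hq1 _]. apply le_INR in Hq1. simpl in Hq1.
      assert (Hnpos : 0 < INR n) by (apply lt_0_INR; lia).
      unfold pq2n in HN1. apply Rabs_lt_between in HN1.
      destruct HN1 as [HN1 _].
      assert (Hx : l / 2 * INR n < INR (p n) * INR (q n) ^ 2).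
      { assert (HN1' : l / 2 < INR (p n) * INR (q n) ^ 2 / INR n) by lra.
        apply Rmult_lt_compat_r with (r := INR n) in HN1'; [|lra].
        replace (INR (p n) * INR (q n) ^ 2 / INR n * INR n) with (INR (p n) * INR (q n) ^ 2) in HN1' by (field; lra).
        lra. }
      assert (HK : 2 * INR K ^ 2 < INR D * l).
      { apply Rmult_lt_compat_r with (r := l) in HD; [|lra].
        unfold Rdiv in HD. rewrite Rmult_assoc, Rinv_l in HD by lra. lra. }
      assert (Hq2 : INR (q n) ^ 2 <= INR K ^ 2) by (apply pow_incr; lra).
      assert (Hp0 : 0 <= INR (p n)) by apply pos_INR.
      assert (INR (p n) * INR (q n) ^ 2 <= INR (p n) * INR K ^ 2) by (apply Rmult_le_compat_l; lra).
      assert (Hpd : INR (p n) + 1 <= INR d).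
      { apply INR_lt in Hbad. apply le_INR in Hbad. rewrite S_INR in Hbad. lra. }
      assert (0 <= INR K ^ 2) by (apply pow_le; lra).
      nra. }
    assert (f n (pK n) 1%nat <= f n (p n) (q n)).
    { apply Rle_trans with (f n (p n) 1%nat).
      - apply Hfp; lia.
      - apply Hfq; lia. }
    lra.
  -
    assert (HB' : forall K N, exists n, (N <= n)%nat /\ (K < q n)%nat /\
                    f n (p n) (q n) < / INR (S K)).
    { intros K N. apply NNPP; intro Hno. apply HB. exists K.
      intros eps Heps N'.
      assert (Hpos : 0 < Rmin eps (/ INR (S K))).
      { apply Rmin_pos; auto. apply Rinv_0_lt_compat, lt_0_INR; lia. }
      destruct (H0 _ Hpos (max N N')) as [n [Hn Hu]].
      exists n. split; [lia|].
      assert (Hq : ~ (K < q n)%nat).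
      { intro Hk. apply Hno. exists n. split; [lia|]. split; [auto|].
        apply Rlt_le_trans with (1 := Hu). apply Rmin_r. }
      split; [lia|]. apply Rlt_le_trans with (1 := Hu). apply Rmin_l. }
    pose (c := fun K N => proj1_sig (constructive_indefinite_description _ (HB' K N))).
    assert (Hc : forall K N, (N <= c K N)%nat /\ (K < q (c K N))%nat /\
                    f (c K N) (p (c K N)) (q (c K N)) < / INR (S K)).
    { intros K N. exact (proj2_sig (constructive_indefinite_description _ (HB' K N))). }
    clearbody c.
    pose (T := fix T (k : nat) : nat := match k with O => c O O | S k' => c (S k') (S (T k')) end).
    assert (HTS : forall k, (T k < T (S k))%nat).
    { intros k. change (T (S k)) with (c (S k) (S (T k))). apply Hc. }
    assert (HTmono : forall j k, (j <= k)%nat -> (T j <= T k)%nat).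
    { intros j k Hjk. induction Hjk; [lia|]. pose proof (HTS m). lia. }
    assert (HTge : forall k, (k <= T k)%nat).
    { induction k; [lia|]. pose proof (HTS k). lia. }
    assert (HTq : forall k, (k < q (T k))%nat /\ f (T k) (p (T k)) (q (T k)) < / INR (S k)).
    { intros [|k]; [apply Hc|]. change (T (S k)) with (c (S k) (S (T k))). apply Hc. }
    clearbody T.
    pose (C := fun n => (exists k, T k = n) \/ (rr n <= q n)%nat).
    pose (p2 := fun n => if excluded_middle_informative (C n) then p n
                         else max 1 (p n * q n ^ 2 / rr n ^ 2)).
    pose (q2 := fun n => if excluded_middle_informative (C n) then q n else rr n).
    assert (Hpos2 : liminf_pos f p2 q2).
    { apply Hii.
      - intros n Hn. unfold p2, q2. destruct (excluded_middle_informative (C n)) as [HC|HC].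
        + apply Hbox; auto.
        + assert (Hqr : (q n < rr n)%nat) by (unfold C in HC; lia).
          destruct (Hbox n Hn) as [Hpn Hqn]. pose proof (rr_pos n Hn).
          split; [|lia]. split; [lia|].
          apply Nat.max_lub; [lia|].
          assert (Hr2 : (rr n ^ 2 <> 0)%nat) by (apply Nat.pow_nonzero; lia).
          apply Nat.le_trans with (p n); [|lia].
          apply Nat.div_le_upper_bound; auto.
          assert (q n ^ 2 <= rr n ^ 2)%nat by (apply Nat.pow_le_mono_l; lia).
          nia.
      - apply is_lim_seq_spec. intros M.
        destruct (nat_gt M) as [m Hm].
        exists (max (S (T m)) (m ^ 4)). intros n Hn.
        apply Rlt_le_trans with (1 := Hm). apply le_INR.
        pose proof (rr_ge m n ltac:(lia)).
        unfold q2. destruct (excluded_middle_informative (C n)) as [HC|HC].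
        + destruct HC as [[k Hk]|Hrq].
          * subst n. destruct (Compare_dec.le_lt_dec k m) as [Hkm|Hkm].
            -- pose proof (HTmono _ _ Hkm). lia.
            -- pose proof (proj1 (HTq k)). lia.
          * lia.
        + lia.
      - exists l. split; auto. apply is_lim_seq_spec. intros eps.
        pose proof (cond_pos eps) as Heps.
        assert (He2 : 0 < eps / 2) by lra.
        destruct (Hlim (mkposreal _ He2)) as [N1 HN1]. simpl in HN1.
        destruct (rr_small _ He2) as [N2 HN2].
        exists (max 1 (max N1 N2)). intros n Hn.
        specialize (HN1 n ltac:(lia)). specialize (HN2 n ltac:(lia)).
        unfold pq2n, p2, q2 in *. destruct (excluded_middle_informative (C n)) as [HC|HC].
        + lra.
        + assert (Hn1 : (1 <= n)%nat) by lia.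
          pose proof (lift_bound (p n) (q n) (rr n) n Hn1 (proj1 (rr_pos n Hn1))) as Hb.
          replace (INR (max 1 (p n * q n ^ 2 / rr n ^ 2)) * INR (rr n) ^ 2 / INR n - l)
            with ((INR (max 1 (p n * q n ^ 2 / rr n ^ 2)) * INR (rr n) ^ 2 / INR n
                   - INR (p n) * INR (q n) ^ 2 / INR n)
                  + (INR (p n) * INR (q n) ^ 2 / INR n - l)) by ring.
          apply Rle_lt_trans with (1 := Rabs_triang _ _). lra. }
    destruct (L1 _ Hpos2) as [eps [Heps [N HN]]].
    destruct (nat_gt (/ eps)) as [m Hm].
    set (k := max N m).
    specialize (HN (T k) ltac:(pose proof (HTge k); unfold k in *; lia)).
    destruct (HTq k) as [_ Hfk].
    unfold p2, q2 in HN. destruct (excluded_middle_informative (C (T k))) as [HC|HC].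
    + assert (Hk : / INR (S k) < eps).
      { assert (Hmk : INR m <= INR k) by (apply le_INR; unfold k; lia).
        rewrite S_INR.
        assert (Hkp : 0 < INR k + 1) by (pose proof (pos_INR k); lra).
        apply Rmult_lt_reg_r with (INR k + 1); [lra|]. rewrite Rinv_l by lra.
        apply Rmult_lt_compat_r with (r := eps) in Hm; [|lra].
        rewrite Rinv_l in Hm by lra. nra. }
      lra.
    + exfalso. apply HC. left. exists k. reflexivity.
Qed.
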